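(* For positive integers $n,m,k$ with $k<m<2k$, $$N_P(n,k,m)\ \ge\ \Bigl(2k-m+\frac{1}{\binom{m-1}{2k-m}}\Bigr)n.$$
   Context: Fix a finite field $\mathbb{F}_q$; $[n]=\{1,\dots,n\}$. An $(n,N,k,m)$-PIR array code over $\mathbb{F}_q$ is an $\mathbb{F}_q$-linear map $\mathcal{C}:\mathbf x\in\mathbb{F}_q^n\mapsto(\mathbf c_1,\dots,\mathbf c_m)$ with buckets $\mathbf c_\ell\in\mathbb{F}_q^{N_\ell}$, $N_\ell\ge1$ independent of $\mathbf x$, $\sum_\ell N_\ell=N$, such that for every $i\in[n]$ there is a partition of $[m]$ into $k$ sets $R_1,\dots,R_k$ such that for each $j$, $x_i$ is an $\mathbb{F}_q$-linear combination of values $f_\ell(\mathbf c_\ell)$, $\ell\in R_j$, for some linear functionals $f_\ell:\mathbb{F}_q^{N_\ell}\to\mathbb{F}_q$ (independent of $\mathbf x$). $N_P(n,k,m)$ denotes the minimum $N$ for which an $(n,N,k,m)$-PIR array code over $\mathbb{F}_q$ exists. *)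

(* Defs.v *)
From HB Require Import structures.
From mathcomp Require Import all_boot all_order all_algebra.
Set Implicit Arguments. Unset Strict Implicit. Unset Printing Implicit Defensive.
Import GRing.Theory.
Local Open Scope ring_scope.

(* The F-linear encoder x in F^n |-> (c_1, ..., c_m) is given bucketwise:
   bucket l (l : 'I_m) has size Ns l >= 1 and c_l = x *m G l, where
   G l : 'M[F]_(n, Ns l) (every F-linear map F^n -> F^(Ns l) is of this form).
   A linear functional f_l : F^(Ns l) -> F is c |-> (c *m v) 0 0, v : 'cV_(Ns l). *)
Definition is_PIR_code (F : finFieldType) (n k m : nat) (Ns : 'I_m -> nat)
    (G : forall l : 'I_m, 'M[F]_(n, Ns l)) : Prop :=
  (forall l, (0 < Ns l)%N) /\
  forall i : 'I_n, exists P : {set {set 'I_m}},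
    [/\ partition P [set: 'I_m], #|P| = k &
      forall R, R \in P ->
        exists (f : forall l : 'I_m, 'cV[F]_(Ns l)) (a : 'I_m -> F),
          forall x : 'rV[F]_n,
            x 0 i = \sum_(l in R) a l * (x *m G l *m f l) 0 0].

Definition has_PIR_code (F : finFieldType) (n N k m : nat) : Prop :=
  exists (Ns : 'I_m -> nat) (G : forall l : 'I_m, 'M[F]_(n, Ns l)),
    @is_PIR_code F n k m Ns G /\ (\sum_(l < m) Ns l)%N = N.

(* Main.v *)
Require Import Defs.
From HB Require Import structures.
From mathcomp Require Import all_boot all_order all_algebra.
From mathcomp Require Import zify ring.
Set Implicit Arguments. Unset Strict Implicit. Unset Printing Implicit Defensive.
Import GRing.Theory.
Local Open Scope ring_scope.

Lemma card_sumP (T : finType) (X : {set T}) : #|X| = (\sum_(x : T) (x \in X : nat))%N.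
Proof.
rewrite -sum1_card big_mkcond /=; apply: eq_bigr => x _; by case: (x \in X).
Qed.

Section LA.
Variable F : fieldType.
Variable n : nat.
Definition ev (j : 'I_n) : 'rV[F]_n := delta_mx 0 j.

Lemma L1 p (V : 'M[F]_(p, n)) (X : {set 'I_n}) :
  (forall j, j \in X -> (ev j <= V)%MS) -> (#|X| <= \rank V)%N.
Proof.
move=> HX.
pose E : 'M[F]_(#|X|, n) := \matrix_(r, c) ((enum_val r == c)%:R).
have rowE' r : row r E = ev (enum_val r).
  by apply/matrixP => a c; rewrite !mxE /= (ord1 a) eqxx eq_sym.
have EV : (E <= V)%MS.
  by apply/row_subP => r0; rewrite rowE'; apply: HX; apply: enum_valP.
have EE : E *m E^T = 1%:M.
  apply/matrixP => r s; rewrite !mxE (bigD1 (enum_val r)) //= big1.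
    rewrite /E !mxE eqxx mul1r addr0 (inj_eq enum_val_inj) eq_sym.
    by case: (s == r).
  by move=> c /negbTE Hc; rewrite /E !mxE eq_sym Hc mul0r.
have := mxrankM_maxl E E^T; rewrite EE mxrank1 => h.
exact: leq_trans h (mxrankS EV).
Qed.

Variable I : eqType.
Variable Nsz : I -> nat.
Variable V : forall l : I, 'M[F]_(Nsz l, n).
Definition Sset l := [set j | (ev j <= V l)%MS].

Lemma L2 (s : seq I) :
  (forall j, j \in \bigcup_(l <- s) Sset l -> (ev j <= \sum_(l <- s) <<V l>>)%MS) /\
  (\rank (\sum_(l <- s) <<V l>>)%MS + \sum_(l <- s) #|Sset l| <=
     #|\bigcup_(l <- s) Sset l| + \sum_(l <- s) \rank (V l))%N.
Proof.
elim: s => [|l s [IH1 IH2]].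
  by rewrite !big_nil mxrank0; split=> // j; rewrite in_set0.
rewrite !big_cons; split.
  move=> j; rewrite in_setU => /orP[H|H].
    apply: submx_trans (addsmxSl _ _); rewrite genmxE.
    by move: H; rewrite inE.
  by apply: submx_trans (addsmxSr _ _); apply: IH1.
set W := (\sum_(l <- s) <<V l>>)%MS%MS.
set U := \bigcup_(l <- s) Sset l.
have h1 := mxrank_sum_cap <<V l>>%MS W.
have h2 := cardsUI (Sset l) U.
have h3 : (#|Sset l :&: U| <= \rank (<<V l>> :&: W)%MS)%N.
  apply: L1 => j; rewrite in_setI => /andP[H1 H2].
  rewrite sub_capmx genmxE IH1 // andbT.
  by move: H1; rewrite inE.
rewrite genmxE in h1.
rewrite -/W -/U in IH2. lia.
Qed.
End LA.

Lemma partition_card (T : finType) (P : {set {set T}}) (A : {set T}) :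
  partition P [set: T] -> #|A| = (\sum_(R in P) #|R :&: A|)%N.
Proof.
case/and3P => /eqP Hcov Htriv H0.
rewrite [LHS]card_sumP.
under [RHS]eq_bigr do rewrite card_sumP.
rewrite exchange_big /=; apply: eq_bigr => x _.
have xc : x \in cover P by rewrite Hcov inE.
rewrite (bigD1 (pblock P x)) ?pblock_mem //= big1 ?addn0.
  by rewrite in_setI mem_pblock xc.
move=> R /andP[RP RB]; rewrite in_setI.
case xR: (x \in R) => //=.
by rewrite (def_pblock Htriv RP xR) eqxx in RB.
Qed.

Section Main.
Variable F : finFieldType.
Variables n k m : nat.
Variable Ns : 'I_m -> nat.
Variable G : forall l : 'I_m, 'M[F]_(n, Ns l).
Hypothesis HP : @is_PIR_code F n k m Ns G.

Definition Vt l : 'M[F]_(Ns l, n) := (G l)^T.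
Local Notation S l := (Sset Vt l).
Definition Ai (i : 'I_n) := [set l | i \in S l].

Lemma recov i : (2 * k <= m + #|Ai i|)%N /\
  ((#|Ai i| < k)%N -> (ev F i <= \sum_(l in ~: Ai i) <<Vt l>>)%MS).
Proof.
case: HP => _ /(_ i) [P [Hpart HcardP Hrec]].
have key R : R \in P ->
  (forall C : {set 'I_m}, R \subset C -> (ev F i <= \sum_(l in C) <<Vt l>>)%MS) /\
  (forall l0, R = [set l0] -> l0 \in Ai i).
  move=> RP; have [f [a Hfa]] := Hrec R RP.
  pose w l := (G l *m f l)^T.
  have wV l : (w l <= Vt l)%MS by rewrite /w trmx_mul submxMl.
  have Ew : ev F i = \sum_(l in R) a l *: w l.
    apply/matrixP => r c; rewrite (ord1 r) summxE !mxE /=.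
    have := Hfa (delta_mx 0 c); rewrite !mxE /= eq_sym => ->.
    apply: eq_bigr => l _.
    by rewrite -mulmxA -rowE !mxE.
  split.
    move=> C RC; rewrite Ew; apply: summx_sub => l lR.
    apply: scalemx_sub; apply: (sumsmx_sup l (subsetP RC l lR)).
    by rewrite genmxE.
  move=> l0 Rl0; rewrite !inE; move: Ew; rewrite Rl0 big_set1 => ->.
  exact: scalemx_sub.
have cm : m = (\sum_(R in P) #|R|)%N.
  by rewrite -(card_partition Hpart) cardsT card_ord.
have cA := partition_card (Ai i) Hpart.
split.
  suff: (2 * k <= \sum_(R in P) #|R| + #|Ai i|)%N by rewrite -cm.
  rewrite [X in (_ <= _ + X)%N]cA -HcardP -sum1_card big_distrr /= -big_split /=.
  apply: leq_sum => R RP.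
  have R0 : R != set0 by apply/eqP => E0; case/and3P: Hpart => _ _ /negP; apply; rewrite -E0.
  rewrite -card_gt0 in R0.
  case: (ltnP 1 #|R|) => H; first by rewrite muln1; apply: leq_trans H (leq_addr _ _).
  have /cards1P [l0 Hl0] : #|R| == 1%N by rewrite eqn_leq H R0.
  have := (key R RP).2 l0 Hl0; rewrite Hl0 cards1 => Hl.
  suff: (0 < #|[set l0] :&: Ai i|)%N by rewrite muln1 add1n ltnS.
  by rewrite card_gt0; apply/set0Pn; exists l0; rewrite in_setI in_set1 eqxx Hl.
move=> Hlt.
case: (boolP [exists R, (R \in P) && (R :&: Ai i == set0)]) => [/existsP [R /andP[RP]] | /existsPn H].
  rewrite setI_eq0 disjoints_subset => RC.
  exact: ((key R RP).1 _ RC).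
have : (k <= #|Ai i|)%N.
  rewrite cA -HcardP -sum1_card; apply: leq_sum => R RP.
  by have := H R; rewrite RP /= card_gt0.
move=> h; exfalso; move: Hlt; rewrite ltnNge h //.
Qed.


Definition dd l := (\rank (Vt l) - #|S l|)%N.

Lemma SleR l : (#|S l| <= \rank (Vt l))%N.
Proof. by apply: L1 => j; rewrite inE. Qed.

Lemma F4 (A : {set 'I_m}) : (#|A| < k)%N ->
  (#|[set i | Ai i == A]| <= \sum_(l in ~: A) dd l)%N.
Proof.
move=> hA.
have [H1 H2] := L2 Vt (enum (~: A)).
rewrite !big_enum /= in H1 H2.
set W := (\sum_(l in ~: A) <<Vt l>>)%MS in H1 H2.
set U := \bigcup_(l in ~: A) S l in H1 H2.
set J := [set i | Ai i == A].
have disj : U :&: J = set0.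
  apply/setP => i; rewrite !inE; apply/negbTE/andP => [[/bigcupP [l lA iS] /eqP E]].
  by move: lA; rewrite inE -E inE iS.
have sub : (#|U :|: J| <= \rank W)%N.
  apply: L1 => j; rewrite in_setU => /orP[/H1 // | ]; rewrite inE => /eqP E.
  by have := (recov j).2; rewrite E; apply.
have := cardsUI U J; rewrite disj cards0 addn0 => cU.
have sumd : (\sum_(l in ~: A) \rank (Vt l) =
   \sum_(l in ~: A) #|S l| + \sum_(l in ~: A) dd l)%N.
  by rewrite -big_split /=; apply: eq_bigr => l _; rewrite /dd subnKC // SleR.
move: H2; rewrite sumd addnCA (addnC (\rank W)) leq_add2l => H2.
by rewrite -(leq_add2l #|U|) -cU (leq_trans sub H2).
Qed.

Lemma sum_const_pred (T : finType) (Q : pred T) (c : nat) :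
  (\sum_(x | Q x) c = #|[set x | Q x]| * c)%N.
Proof. by rewrite -sum_nat_const; apply: eq_bigl => x; rewrite inE. Qed.

Lemma main_nat : (0 < k)%N -> (k < m)%N -> (m < 2 * k)%N ->
  (((2 * k - m) * 'C(m.-1, 2 * k - m) + 1) * n <=
   'C(m.-1, 2 * k - m) * \sum_(l < m) Ns l)%N.
Proof.
move=> hk hkm hm.
set t := (2 * k - m)%N.
set B := 'C(m.-1, t).
have htk : (t < k)%N by rewrite /t; lia.
set SA := (\sum_(i < n) #|Ai i|)%N.
set D := (\sum_(l < m) dd l)%N.
set n0 := (\sum_(i < n) (#|Ai i| == t : nat))%N.
set NS := (\sum_(l < m) Ns l)%N.
have fa : ((t + 1) * n <= SA + n0)%N.
  rewrite /SA /n0 -big_split /=.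
  have -> : ((t + 1) * n = \sum_(i < n) (t + 1))%N by rewrite sum_nat_const card_ord mulnC.
  apply: leq_sum => i _.
  have ht : (t <= #|Ai i|)%N by rewrite /t leq_subLR; exact: (recov i).1.
  case: eqP => E /=; first by rewrite E.
  rewrite addn0 addn1 ltn_neqAle ht andbT; apply/eqP => e; apply: E; by rewrite e.
have fb : (SA + D <= NS)%N.
  have -> : SA = (\sum_(l < m) #|S l|)%N.
    rewrite /SA; under eq_bigr do rewrite card_sumP.
    under [RHS]eq_bigr do rewrite card_sumP.
    rewrite exchange_big /=; apply: eq_bigr => l _; apply: eq_bigr => i _.
    by rewrite !inE.
  rewrite /D -big_split /=; apply: leq_sum => l _.
  by rewrite /dd subnKC ?SleR // rank_leq_row.
have fn0 : (n0 <= n)%N.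
  apply: (@leq_trans (\sum_(i < n) 1)%N).
    by apply: leq_sum => i _; case: eqP.
  by rewrite sum1_card card_ord.
have fc : (n0 <= B * D)%N.
  have -> : n0 = (\sum_(A : {set 'I_m} | #|A| == t) #|[set i | Ai i == A]|)%N.
    under [RHS]eq_bigr do rewrite card_sumP.
    rewrite exchange_big /=; apply: eq_bigr => i _.
    case: (boolP (#|Ai i| == t)) => Ht /=.
      rewrite (bigD1 (Ai i)) //= inE eqxx big1 // => A /andP[_ /negbTE]; 
        by rewrite inE eq_sym => ->.
    rewrite big1 // => A HA; rewrite inE; case: eqP => // E.
    by rewrite E HA in Ht.
  apply: (@leq_trans (\sum_(A : {set 'I_m} | #|A| == t) \sum_(l in ~: A) dd l)%N).
    by apply: leq_sum => A /eqP HA; apply: F4; rewrite HA.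
  rewrite (exchange_big_dep xpredT) /=; last by [].
  rewrite /D big_distrr /=; apply: eq_leq; apply: eq_bigr => l _.
  rewrite sum_const_pred; congr (_ * _)%N.
  rewrite /B; have -> : m.-1 = #|[set~ l]| by rewrite cardsC1 card_ord.
  rewrite -cards_draws; apply: eq_card => A; rewrite !inE andbC.
  congr (_ && _).
  apply/negP/subsetP => [h x xA | h lA]; last by have := h l lA; rewrite !inE eqxx.
  by rewrite !inE; apply/eqP => E; apply: h; rewrite -E.
have hB : (0 < B)%N by rewrite /B bin_gt0; lia.
have f1 : (B * ((t + 1) * n) <= B * (SA + n0))%N by rewrite leq_mul2l fa orbT.
have f2 : (B * (SA + D) <= B * NS)%N by rewrite leq_mul2l fb orbT.
have f4 : ((B - 1) * n0 <= (B - 1) * n)%N by rewrite leq_mul2l fn0 orbT.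
have eB : B = ((B - 1) + 1)%N by lia.
rewrite -/NS.
set B1 := (B - 1)%N in f4 eB.
rewrite eB in f1 f2 fc *.
nia.
Qed.

End Main.

Theorem theorem3p2 (F : finFieldType) (n k m N : nat) :
  (0 < n)%N -> (0 < k)%N -> (k < m)%N -> (m < 2 * k)%N ->
  has_PIR_code F n N k m ->
  (((2 * k - m)%N)%:R + 1 / ('C(m.-1, 2 * k - m))%:R) * n%:R <= (N%:R : rat).
Proof.
move=> hn hk hkm hm [Ns [G [HP HN]]].
have := main_nat HP hk hkm hm; rewrite HN.
set B := 'C(m.-1, 2 * k - m); set t := (2 * k - m)%N => h.
have Bpos : (0 < B)%N by rewrite /B bin_gt0; lia.
have -> : ((t%:R + 1 / B%:R) * n%:R : rat) = (((t * B + 1) * n)%:R) / B%:R.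
  rewrite natrM natrD natrM; field.
  by rewrite Num.Theory.pnatr_eq0 -lt0n.
by rewrite Num.Theory.ler_pdivrMr ?Num.Theory.ltr0n // -natrM Num.Theory.ler_nat (mulnC N).
Qed.
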